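(* Fix an integer $n\ge 1$. For every classical strategy $h$, the expected score satisfies $V(\mathcal{F}_{\mathrm{BV}},h)\le \frac{1}{2^n-1}$, and this value is attained; hence $V(\mathcal{F}_{\mathrm{BV}},C)=\max_{h\in C}V(\mathcal{F}_{\mathrm{BV}},h)=\frac{1}{2^n-1}$. Moreover $V(\mathcal{F}_{\mathrm{BV}},Q)=\sup_{h\in Q}V(\mathcal{F}_{\mathrm{BV}},h)=1$, so that \[ \frac{V(\mathcal{F}_{\mathrm{BV}},Q)}{V(\mathcal{F}_{\mathrm{BV}},C)}=2^n-1 . \]
   Context: Let $\omega=\{0,1\}^n$. For $u\in\omega\setminus\{0^n\}$ and $b\in\{0,1\}$ let $S_{u,b}=\{x\in\omega : u\cdot x\equiv b \pmod 2\}$ (so $|S_{u,b}|=2^{n-1}$), and let $\mathcal{F}_{\mathrm{BV}}=\{S_{u,b}\}$, a family of $2(2^n-1)$ subsets. For a nonempty $S\subset\omega$, the subset state is $|S\rangle=|S|^{-1/2}\sum_{x\in S}|x\rangle$ on $n$ qubits. In the complement sampling game, a set $S$ is drawn uniformly at random from $\mathcal{F}_{\mathrm{BV}}$, the player receives one copy of $|S\rangle$ and outputs $y\in\omega$; the strategy is described by the conditional distribution $h(y\mid S)$. The score is $\sigma(S,y)=+1$ if $y\in\bar S=\omega\setminus S$ and $\sigma(S,y)=-1$ otherwise, and the expected score is $V(\mathcal{F}_{\mathrm{BV}},h)=\mathbb{E}_{S\sim\mathrm{Unif}(\mathcal{F}_{\mathrm{BV}})}\mathbb{E}_{y\sim h(\cdot\mid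 S)}[\sigma(S,y)]$. A quantum strategy (set $Q$) may apply any quantum operation to $|S\rangle$ (with ancillas) followed by any measurement yielding $y$. A classical strategy (set $C$) first measures $|S\rangle$ in the computational basis, obtaining $x$ uniformly distributed on $S$, and then outputs $y$ according to an arbitrary (possibly randomized) rule $h(y\mid x)$ depending only on $x$, so that $h(y\mid S)=\sum_{x}h(y\mid x)\,|\langle x|S\rangle|^2$. *)

(* Defs.v *)
From HB Require Import structures.
From mathcomp Require Import all_boot all_order all_algebra.
From mathcomp Require Import complex.
Set Implicit Arguments. Unset Strict Implicit. Unset Printing Implicit Defensive.
Import Order.TTheory GRing.Theory Num.Theory.
Local Open Scope ring_scope.

Definition omega (n : nat) := {ffun 'I_n -> bool}.
Definition zerovec (n : nat) : omega n := [ffun => false].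

Definition dotp (n : nat) (u x : omega n) : bool :=
  odd (\sum_(i < n) ((u i && x i) : nat))%N.

Definition Sub (n : nat) (u : omega n) (b : bool) : {set omega n} :=
  [set x | dotp u x == b].

Definition FBV (n : nat) : {set {set omega n}} :=
  [set Sub ub.1 ub.2 | ub : omega n * bool & ub.1 != zerovec n].

Definition score (R : numDomainType) (n : nat) (S : {set omega n}) (y : omega n) : R :=
  if y \in S then -1 else 1.

(* expected score of a strategy given by the conditional law h(y|S) *)
Definition Vscore (R : numFieldType) (n : nat) (F : {set {set omega n}})
  (h : {set omega n} -> omega n -> R) : R :=
  (#|F|%:R)^-1 * \sum_(S in F) \sum_(y : omega n) h S y * score R S y.

(* amplitude <x|S> of the subset state |S> (real) *)
Definition amp (R : rcfType) (n : nat) (S : {set omega n}) (x : omega n) : R :=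
  if x \in S then (Num.sqrt (#|S|%:R))^-1 else 0.

Definition ket (R : rcfType) (n : nat) (S : {set omega n}) (x : omega n) : R[i] :=
  Complex (amp R S x) 0.

(* classical strategies: stochastic rule h(y|x) applied to the outcome of a
   computational-basis measurement *)
Definition classical_rule (R : rcfType) (n : nat) (h : omega n -> omega n -> R) : Prop :=
  (forall x y, 0 <= h x y) /\ (forall x, \sum_(y : omega n) h x y = 1).

Definition classical_cond (R : rcfType) (n : nat) (h : omega n -> omega n -> R)
  (S : {set omega n}) (y : omega n) : R :=
  \sum_(x : omega n) h x y * (amp R S x) ^+ 2.

(* quantum strategies: a POVM {E_y} on the n-qubit space C^omega
   (E y x x' = <x|E_y|x'>) *)
Definition povm (R : rcfType) (n : nat) (E : omega n -> omega n -> omega n -> R[i]) : Prop :=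
  (forall y x x', E y x' x = (E y x x')^*) /\
  (forall y (v : omega n -> R[i]),
      0 <= \sum_(x : omega n) \sum_(x' : omega n) (v x)^* * E y x x' * v x') /\
  (forall x x', \sum_(y : omega n) E y x x' = (x == x')%:R).

(* h(y|S) = <S|E_y|S> (real part; it is real for a POVM) *)
Definition quantum_cond (R : rcfType) (n : nat) (E : omega n -> omega n -> omega n -> R[i])
  (S : {set omega n}) (y : omega n) : R :=
  complex.Re (\sum_(x : omega n) \sum_(x' : omega n)
                 (ket R S x)^* * E y x x' * ket R S x').

(* Main.v *)
Require Import Defs.
From HB Require Import structures.
From mathcomp Require Import all_boot all_order all_algebra.
From mathcomp Require Import complex ring lra.
Import Order.TTheory GRing.Theory Num.Theory.
Set Implicit Arguments. Unset Strict Implicit.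
Local Open Scope ring_scope.

Definition xorv n (x y : omega n) : omega n := [ffun i => addb (x i) (y i)].
Definition ev n (i : 'I_n) : omega n := [ffun j => j == i].

Lemma dotpE n (u x : omega n) : dotp u x = \big[addb/false]_i (u i && x i).
Proof.
rewrite /dotp (big_morph odd oddD (erefl (odd 0))).
by apply: eq_bigr => i _; rewrite oddb.
Qed.

Lemma dotpC n (u x : omega n) : dotp u x = dotp x u.
Proof. by rewrite !dotpE; apply: eq_bigr => i _; rewrite andbC. Qed.

Lemma dotp_xor n (u x y : omega n) : dotp u (xorv x y) = addb (dotp u x) (dotp u y).
Proof.
rewrite !dotpE -big_split /=; apply: eq_bigr => i _; rewrite ffunE.
by case: (u i); case: (x i); case: (y i).
Qed.

Lemma dotp_ev n (u : omega n) i : dotp u (ev i) = u i.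
Proof.
rewrite dotpE (bigD1 i) //= ffunE eqxx andbT big1 ?addbF // => j /negPf ji.
by rewrite ffunE ji andbF.
Qed.

Lemma dotp0 n (u : omega n) : dotp u (zerovec n) = false.
Proof. by rewrite dotpE big1 // => j _; rewrite ffunE andbF. Qed.

Lemma card_omega n : #|omega n| = (2 ^ n)%N.
Proof. by rewrite card_ffun card_bool card_ord. Qed.

Lemma key_count n (z : omega n) (b : bool) : z != zerovec n ->
  (#|[set u : omega n | dotp z u == b]| * 2 = 2 ^ n)%N.
Proof.
move=> nz.
have [i zi] : exists i, z i.
  case: (boolP [exists i, z i]) => [/existsP [i zi]|]; first by exists i.
  move=> /existsPn H; case/eqP: nz; apply/ffunP => i; rewrite !ffunE.
  by apply/negbTE/H.
set f := fun u : omega n => xorv u (ev i).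
have fK : involutive f.
  by move=> u; apply/ffunP => j; rewrite !ffunE addbK.
have finj : injective f := inv_inj fK.
have Hpre : f @^-1: [set u | dotp z u == b] = ~: [set u | dotp z u == b].
  apply/setP => u; rewrite !inE /f dotp_xor dotp_ev zi.
  by case: (dotp z u); case: b.
have := cardsC [set u | dotp z u == b].
rewrite -Hpre card_preimset // card_omega => <-.
by rewrite muln2 addnn.
Qed.

Lemma card_Sub n (u : omega n) b : u != zerovec n -> (1 <= n)%N ->
  #|Defs.Sub u b| = (2 ^ n.-1)%N.
Proof.
move=> nz hn; have := key_count b nz.
case: n hn u nz => // n _ u nz; rewrite expnS /Defs.Sub => H.
by apply/eqP; rewrite -(eqn_pmul2l (isT : (0 < 2)%N)) mulnC H.
Qed.

Lemma Sub_inj n : injective (fun ub : omega n * bool => Defs.Sub ub.1 ub.2).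
Proof.
move=> [u b] [u' b'] /= /setP E.
have Eb : b = b'.
  by have := E (zerovec n); rewrite !inE !dotp0 => /eqP; case: (b); case: (b').
subst b'; congr pair; apply/ffunP => i.
have := E (ev i); rewrite !inE !dotp_ev.
by case: (u i); case: (u' i); case: (b).
Qed.

Lemma sum_FBV (R : zmodType) n (G : {set omega n} -> R) :
  \sum_(S in FBV n) G S = \sum_(u | u != zerovec n) \sum_b G (Defs.Sub u b).
Proof.
rewrite /FBV big_imset; last by move=> ? ? _ _; apply: Sub_inj.
rewrite pair_big /=; apply: eq_bigl => -[u b]; rewrite /= !inE andbT.
done.
Qed.

Lemma card_FBV_R (R : numFieldType) n :
  (#|FBV n|%:R : R) = 2 * ((2 ^ n)%:R - 1).
Proof.
have -> : (#|FBV n|%:R : R) = \sum_(S in FBV n) 1 by rewrite sumr_const.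
rewrite sum_FBV.
have -> : \sum_(u | u != zerovec n) \sum_(b : bool) (1 : R) = \sum_(u | u != zerovec n) 2.
  by apply: eq_bigr => u _; rewrite sumr_const card_bool.
rewrite sumr_const.
have -> : #|[pred u : omega n | u != zerovec n]| = (2 ^ n).-1.
  by rewrite -card_omega -(cardC1 (zerovec n)); apply: eq_card => u; rewrite !inE.
have h : (0 < 2 ^ n)%N by rewrite expn_gt0.
rewrite -mulr_natr -[in RHS](prednK h) -addn1 natrD; ring.
Qed.

Lemma sum_ind (R : pzRingType) (T : finType) (S : {set T}) :
  \sum_x ((x \in S)%:R : R) = #|S|%:R.
Proof.
rewrite -sumr_const [RHS]big_mkcond /=; apply: eq_bigr => x _.
by case: (x \in S).
Qed.

Lemma amp2 (R : rcfType) n (S : {set omega n}) x :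
  amp R S x ^+ 2 = (x \in S)%:R * (#|S|%:R)^-1.
Proof.
rewrite /amp; case: (x \in S); last by rewrite expr0n mul0r.
by rewrite exprVn sqr_sqrtr ?ler0n // mul1r.
Qed.

Lemma scoreE (R : numDomainType) n (S : {set omega n}) y :
  score R S y = 1 - 2 * (y \in S)%:R.
Proof. by rewrite /score; case: (y \in S) => /=; ring. Qed.

Lemma Gc_S (R : rcfType) n (h : omega n -> omega n -> R) (S : {set omega n}) :
  classical_rule h -> (0 < #|S|)%N ->
  \sum_y classical_cond h S y * score R S y =
  1 - 2 * (#|S|%:R)^-1 * \sum_x \sum_y h x y * (x \in S)%:R * (y \in S)%:R.
Proof.
move=> [h0 h1] Sp.
set k := (#|S|%:R : R).
have k0 : k != 0 by rewrite pnatr_eq0 -lt0n.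
rewrite /classical_cond.
under eq_bigr do rewrite mulr_suml.
rewrite exchange_big /=.
have step : forall x, \sum_y h x y * amp R S x ^+ 2 * score R S y =
   (x \in S)%:R * k^-1 - 2 * k^-1 * \sum_y h x y * (x \in S)%:R * (y \in S)%:R.
  move=> x; rewrite amp2.
  rewrite (eq_bigr (fun y => (x \in S)%:R * k^-1 * h x y -
            2 * k^-1 * (h x y * (x \in S)%:R * (y \in S)%:R))); last first.
    by move=> y _; rewrite scoreE /k; ring.
  by rewrite sumrB -!mulr_sumr h1 mulr1.
rewrite (eq_bigr _ (fun x _ => step x)) sumrB -mulr_sumr -mulr_suml sum_ind.
by rewrite mulfV.
Qed.

Lemma dotp0l n (x : omega n) : dotp (zerovec n) x = false.
Proof. by rewrite dotpC dotp0. Qed.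

Lemma exp_half n : (1 <= n)%N -> (2 ^ n = 2 ^ n.-1 * 2)%N.
Proof. by case: n => // n _; rewrite expnS mulnC. Qed.

Lemma card_eqdot n (x y : omega n) : (1 <= n)%N ->
  #|[set u : omega n | dotp u x == dotp u y]| = (2 ^ n.-1 + (x == y) * 2 ^ n.-1)%N.
Proof.
move=> hn; case: (eqVneq x y) => [<-|nxy].
  have -> : [set u : omega n | dotp u x == dotp u x] = setT.
    by apply/setP => u; rewrite !inE eqxx.
  by rewrite cardsT card_omega exp_half // muln2 -addnn /= ?mul1n.
have nz : xorv x y != zerovec n.
  apply: contra nxy => /eqP E; apply/eqP/ffunP => i.
  have := congr1 (fun f : omega n => f i) E; rewrite !ffunE.
  by case: (x i); case: (y i).
have := key_count false nz; rewrite exp_half // => /eqP; rewrite eqn_mul2r /=.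
move=> /eqP <-; rewrite mul0n addn0; apply: eq_card => u; rewrite !inE.
by rewrite (dotpC (xorv x y)) dotp_xor; case: (dotp u x); case: (dotp u y).
Qed.

Lemma N_xy (R : comPzRingType) n (x y : omega n) : (1 <= n)%N ->
  \sum_(u | u != zerovec n) \sum_b
     ((x \in Defs.Sub u b)%:R * (y \in Defs.Sub u b)%:R : R) =
  (2 ^ n.-1)%:R - 1 + (x == y)%:R * (2 ^ n.-1)%:R.
Proof.
move=> hn.
have inner : forall u, \sum_b ((x \in Defs.Sub u b)%:R * (y \in Defs.Sub u b)%:R : R)
   = (u \in [set u : omega n | dotp u x == dotp u y])%:R.
  move=> u; rewrite big_bool /Defs.Sub !inE.
  by case: (dotp u x); case: (dotp u y); rewrite /= ?mulr0 ?mul0r ?mulr1 ?addr0 ?add0r.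
rewrite (eq_bigr _ (fun u _ => inner u)).
have full := sum_ind R [set u : omega n | dotp u x == dotp u y].
rewrite card_eqdot // natrD natrM (bigD1 (zerovec n)) //= inE !dotp0l eqxx in full.
apply: (@addrI _ 1); rewrite full; ring.
Qed.

Lemma sum4_exchange (R : zmodType) (I J K L : finType) (P : pred I)
  (F : I -> J -> K -> L -> R) :
  \sum_(i | P i) \sum_j \sum_k \sum_l F i j k l =
  \sum_k \sum_l \sum_(i | P i) \sum_j F i j k l.
Proof.
rewrite (eq_bigr (fun i => \sum_k \sum_j \sum_l F i j k l)); last first.
  by move=> i _; rewrite exchange_big.
rewrite exchange_big; apply: eq_bigr => k _.
rewrite (eq_bigr (fun i => \sum_l \sum_j F i j k l)); last first.
  by move=> i _; rewrite exchange_big.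
by rewrite exchange_big.
Qed.

Lemma V_classical (R : rcfType) n (h : omega n -> omega n -> R) :
  (1 <= n)%N -> classical_rule h ->
  Vscore (FBV n) (classical_cond h) =
  (1 - \sum_x h x x) / ((2 ^ n)%:R - 1).
Proof.
move=> hn hr; have [h0 h1] := hr.
set K := (2 ^ n.-1)%N.
have KR : ((2 ^ n)%:R : R) = 2 * K%:R by rewrite exp_half // natrM mulrC.
have K0 : (K%:R : R) != 0 by rewrite pnatr_eq0 /K expn_eq0.
have cardF := card_FBV_R R n.
rewrite /Vscore cardF sum_FBV.
have E1 : forall u, u != zerovec n -> \sum_b \sum_y classical_cond h (Defs.Sub u b) y *
       score R (Defs.Sub u b) y =
   \sum_b (1 - 2 * (K%:R)^-1 * \sum_x \sum_y h x y *
       ((x \in Defs.Sub u b)%:R * (y \in Defs.Sub u b)%:R)).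
  move=> u nz; apply: eq_bigr => b _.
  rewrite Gc_S // ?card_Sub // ?expn_gt0 //.
  by congr (_ - _ * _); apply: eq_bigr => x _; apply: eq_bigr => y _; rewrite mulrA.
rewrite (eq_bigr _ E1).
under eq_bigr do rewrite sumrB.
rewrite sumrB.
have -> : \sum_(u | u != zerovec n) \sum_(b : bool) (1 : R) = 2 * ((2 ^ n)%:R - 1).
  by rewrite -cardF -sumr_const (sum_FBV (fun _ => (1 : R))).
under eq_bigr do rewrite -mulr_sumr.
rewrite -mulr_sumr.
rewrite sum4_exchange.
have E2 : forall x y, \sum_(u | u != zerovec n) \sum_b h x y *
        ((x \in Defs.Sub u b)%:R * (y \in Defs.Sub u b)%:R) =
      h x y * (K%:R - 1 + (x == y)%:R * K%:R).
  move=> x y; rewrite -(N_xy R x y hn) mulr_sumr; apply: eq_bigr => u _.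
  by rewrite mulr_sumr.
under eq_bigr do under eq_bigr do rewrite E2.
have E3 : forall x, \sum_y h x y * (K%:R - 1 + (x == y)%:R * K%:R) =
    (K%:R - 1) + h x x * K%:R.
  move=> x.
  rewrite (eq_bigr (fun y => (K%:R - 1) * h x y + K%:R * (h x y * (x == y)%:R)));
    last by move=> y _; ring.
  rewrite big_split /= -!mulr_sumr h1 mulr1 (bigD1 x) //= eqxx mulr1 big1 ?addr0.
    by rewrite mulrC.
  by move=> y /negPf; rewrite eq_sym => ->; rewrite mulr0.
under eq_bigr do rewrite E3.
rewrite big_split /= sumr_const card_omega -mulr_suml.
have K1 : (1 : R) <= K%:R by rewrite ler1n /K expn_gt0.
have D0 : (2 : R) * K%:R - 1 != 0 by rewrite lt0r_neq0 //; lra.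
set D := \sum_i h i i. set k := (K%:R : R). move: D0 K0; rewrite -/k => D0 K0.
rewrite -[(k - 1) *+ _]mulr_natr KR.
by field; rewrite D0 K0.
Qed.

Lemma conjE (R : rcfType) (x : R[i]) : x^* = conjc x.
Proof. by []. Qed.

Lemma conjR (R : rcfType) (x : R) : (x%:C)%C^* = (x%:C)%C.
Proof. by rewrite conjE conjc_real. Qed.

Lemma ReC (R : rcfType) (x : R) : complex.Re ((x%:C)%C) = x.
Proof. by []. Qed.

Lemma ReD (R : rcfType) (x y : R[i]) : complex.Re (x + y) = complex.Re x + complex.Re y.
Proof. by case: x; case: y. Qed.

Lemma Re_sum (R : rcfType) (I : finType) (F : I -> R[i]) :
  complex.Re (\sum_i F i) = \sum_i complex.Re (F i).
Proof. exact: (big_morph _ (@ReD R) (erefl _)). Qed.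

Lemma ketE (R : rcfType) n (S : {set omega n}) x : ket R S x = ((amp R S x)%:C)%C.
Proof. by []. Qed.

Lemma sum_delta (R : pzRingType) (T : finType) (x : T) :
  \sum_y ((x == y)%:R : R) = 1.
Proof.
rewrite (bigD1 x) //= eqxx big1 ?addr0 // => y /negPf.
by rewrite eq_sym => ->.
Qed.

Lemma sum_delta2 (R : pzRingType) (T : finType) (x x' : T) :
  \sum_y ((x == y)%:R * (x' == y)%:R : R) = (x == x')%:R.
Proof.
rewrite (bigD1 x) //= eqxx mul1r big1 ?addr0 ?(eq_sym x') // => y /negPf.
by rewrite eq_sym => ->; rewrite mul0r.
Qed.

Lemma sum_amp2 (R : rcfType) n (S : {set omega n}) :
  \sum_x amp R S x ^+ 2 = (#|S|%:R) * (#|S|%:R)^-1.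
Proof.
under eq_bigr do rewrite amp2.
by rewrite -mulr_suml sum_ind.
Qed.

Lemma qc_ge0 (R : rcfType) n (E : omega n -> omega n -> omega n -> R[i]) (S : {set omega n}) y :
  povm E -> 0 <= quantum_cond E S y.
Proof.
move=> [_ [psd _]]; have := psd y (ket R S).
by rewrite lecE => /andP [_]; rewrite /quantum_cond.
Qed.

Lemma qc_sum (R : rcfType) n (E : omega n -> omega n -> omega n -> R[i]) (S : {set omega n}) :
  povm E -> \sum_y quantum_cond E S y = \sum_x amp R S x ^+ 2.
Proof.
move=> [_ [_ hsum]].
rewrite /quantum_cond -Re_sum exchange_big /=.
rewrite (eq_bigr (fun x => \sum_x' (ket R S x)^* * (x == x')%:R * ket R S x')); last first.
  move=> x _; rewrite exchange_big /=; apply: eq_bigr => x' _.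
  by rewrite -mulr_suml -mulr_sumr hsum.
rewrite Re_sum; apply: eq_bigr => x _.
rewrite (bigD1 x) //= eqxx mulr1 big1 ?addr0; last first.
  by move=> x' /negPf; rewrite eq_sym => ->; rewrite mulr0 mul0r.
by rewrite !ketE conjR -rmorphM ReC expr2.
Qed.

Lemma V_quantum_le (R : rcfType) n (E : omega n -> omega n -> omega n -> R[i]) :
  povm E -> Vscore (FBV n) (quantum_cond E) <= 1.
Proof.
move=> hE; rewrite /Vscore.
have H : \sum_(S in FBV n) \sum_y quantum_cond E S y * score R S y <= \sum_(S in FBV n) 1.
  apply: ler_sum => S _.
  apply: (le_trans (y := \sum_y quantum_cond E S y)).
    apply: ler_sum => y _; rewrite -[X in _ <= X]mulr1; apply: ler_wpM2l.
      exact: qc_ge0.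
    by rewrite /score; case: (y \in S) => //; lra.
  rewrite qc_sum // sum_amp2.
  case: (eqVneq (#|S|%:R : R) 0) => [->|nz]; first by rewrite mul0r ler01.
  by rewrite mulfV.
rewrite sumr_const in H.
case: (eqVneq (#|FBV n|%:R : R) 0) => [->|nz]; first by rewrite invr0 mul0r ler01.
by rewrite -[X in _ <= X](mulVf nz) ler_wpM2l // invr_ge0 ler0n.
Qed.

Definition wv (R : rcfType) n (y x : omega n) : R := 1 - (2 ^ n.-1)%:R * (x == y)%:R.
Definition Eopt (R : rcfType) n (y x x' : omega n) : R[i] :=
  ((((2 ^ n.-1)%:R ^+ 2)^-1 * wv R y x * wv R y x')%:C)%C.

Lemma povm_Eopt (R : rcfType) n : (1 <= n)%N -> povm (Eopt R (n:=n)).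
Proof.
move=> hn; split; [|split].
- by move=> y x x'; rewrite /Eopt conjR; congr (_%:C)%C; ring.
- move=> y v.
  set c := (((2 ^ n.-1)%:R : R) ^+ 2)^-1.
  set s := \sum_x ((wv R y x)%:C)%C * v x.
  have -> : \sum_x \sum_x' (v x)^* * Eopt R y x x' * v x' = (c%:C)%C * (s^* * s).
    rewrite /s rmorph_sum /= big_distrl /= mulr_sumr; apply: eq_bigr => x _.
    rewrite big_distrr /= mulr_sumr; apply: eq_bigr => x' _.
    by rewrite rmorphM /= conjR /Eopt !rmorphM /=; ring.
  by rewrite mulr_ge0 // ?(mulrC _ s) ?mul_conjC_ge0 // ler0c invr_ge0 exprn_ge0 ?ler0n.
- move=> x x'; rewrite /Eopt -rmorph_sum /=.
  have -> : ((x == x')%:R : R[i]) = ((((x == x')%:R : R))%:C)%C by case: (x == x').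
  congr (_%:C)%C.
  set K := ((2 ^ n.-1)%:R : R).
  have K0 : K != 0 by rewrite pnatr_eq0 expn_eq0.
  rewrite (eq_bigr (fun y => K^-2 * (1 - K * (x == y)%:R - K * (x' == y)%:R
      + K ^+ 2 * ((x == y)%:R * (x' == y)%:R)))); last first.
    by move=> y _; rewrite /wv -/K; ring.
  rewrite -mulr_sumr !big_split /= !sumrN -!mulr_sumr !sum_delta sum_delta2.
  rewrite sumr_const card_omega exp_half // -/K.
  rewrite -[_ *+ _]mulr_natr natrM -/K mul1r; field.
  by rewrite K0.
Qed.

Lemma qc_Eopt (R : rcfType) n (S : {set omega n}) y :
  quantum_cond (Eopt R (n:=n)) S y =
  (((2 ^ n.-1)%:R : R) ^+ 2)^-1 * (\sum_x amp R S x * wv R y x) ^+ 2.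
Proof.
rewrite /quantum_cond.
set c := (((2 ^ n.-1)%:R : R) ^+ 2)^-1.
rewrite (eq_bigr (fun x => ((\sum_x' amp R S x * (c * wv R y x * wv R y x') * amp R S x')%:C)%C)); last first.
  move=> x _; rewrite rmorph_sum; apply: eq_bigr => x' _.
  by rewrite !ketE conjR /Eopt -!rmorphM.
rewrite -rmorph_sum ReC expr2 big_distrl mulr_sumr; apply: eq_bigr => x _.
rewrite big_distrr mulr_sumr; apply: eq_bigr => x' _ /=; ring.
Qed.

Lemma sum_amp_w (R : rcfType) n (u : omega n) b y : (1 <= n)%N -> u != zerovec n ->
  y \in Defs.Sub u b -> \sum_x amp R (Defs.Sub u b) x * wv R y x = 0.
Proof.
move=> hn nz yS.
set S := Defs.Sub u b.
set a := (Num.sqrt (#|S|%:R : R))^-1.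
set K := ((2 ^ n.-1)%:R : R).
rewrite (eq_bigr (fun x => a * (x \in S)%:R - a * K * ((x \in S)%:R * (x == y)%:R))); last first.
  by move=> x _; rewrite /amp /wv -/a -/K; case: (x \in S) => /=; ring.
rewrite sumrB -!mulr_sumr sum_ind.
rewrite (bigD1 y) //= yS eqxx mulr1 big1 ?addr0; last first.
  by move=> x /negPf ->; rewrite mulr0.
by rewrite /S card_Sub // -/K mulr1 subrr.
Qed.

Lemma V_Eopt (R : rcfType) n : (1 <= n)%N -> Vscore (FBV n) (quantum_cond (Eopt R (n:=n))) = 1.
Proof.
move=> hn; have hE := povm_Eopt R hn.
rewrite /Vscore.
have -> : \sum_(S in FBV n) \sum_y quantum_cond (Eopt R (n:=n)) S y * score R S y =
          \sum_(S in FBV n) 1.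
  rewrite !sum_FBV; apply: eq_bigr => u nz; apply: eq_bigr => b _.
  rewrite -[RHS](_ : \sum_x amp R (Defs.Sub u b) x ^+ 2 = 1); last first.
    rewrite sum_amp2 mulfV // pnatr_eq0 card_Sub // expn_eq0 //.
  rewrite -(qc_sum (Defs.Sub u b) hE); apply: eq_bigr => y _.
  rewrite /score; case: ifP => yS; last by rewrite mulr1.
  by rewrite qc_Eopt sum_amp_w // expr0n mulr0 mul0r.
rewrite sumr_const mulVf //.
  have h2 : (2 <= 2 ^ n)%N by rewrite -{1}(expn1 2) leq_exp2l.
  have : (2 : R) <= (2 ^ n)%:R by rewrite ler_nat.
  by rewrite card_FBV_R => H2; rewrite lt0r_neq0 //; lra.
Qed.

Unset Implicit Arguments.
Set Strict Implicit.

Theorem mainTheorem1 (R : rcfType) (n : nat) (hn : (1 <= n)%N) :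
  (* classical value: max over C is 1/(2^n-1) *)
  ((forall h : omega n -> omega n -> R, classical_rule h ->
      Vscore (FBV n) (classical_cond h) <= ((2 ^ n - 1)%N%:R)^-1) /\
   (exists h : omega n -> omega n -> R, classical_rule h /\
      Vscore (FBV n) (classical_cond h) = ((2 ^ n - 1)%N%:R)^-1)) /\
  (* quantum value: sup over Q is 1 *)
  ((forall E : omega n -> omega n -> omega n -> R[i], povm E ->
      Vscore (FBV n) (quantum_cond E) <= 1) /\
   (forall eps : R, 0 < eps -> exists E : omega n -> omega n -> omega n -> R[i],
      povm E /\ 1 - eps < Vscore (FBV n) (quantum_cond E))).
Proof.
have h2 : (2 <= 2 ^ n)%N by rewrite -{1}(expn1 2) leq_exp2l.
have H2 : (2 : R) <= (2 ^ n)%:R by rewrite ler_nat.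
have cE : ((2 ^ n - 1)%N%:R : R) = (2 ^ n)%:R - 1 by rewrite natrB ?expn_gt0.
split; split.
- move=> h hr; rewrite V_classical // cE.
  have D0 : 0 <= \sum_x h x x by apply: sumr_ge0 => x _; exact: hr.1.
  rewrite -[X in _ <= X]mul1r; apply: ler_wpM2r; first by rewrite invr_ge0; lra.
  lra.
- pose i0 : 'I_n := Ordinal hn.
  exists (fun x y => ((y == xorv x (ev i0))%:R : R)); split.
    split; first by move=> x y; rewrite ler0n.
    by move=> x; under eq_bigr do rewrite eq_sym; rewrite sum_delta.
  rewrite V_classical //; last first.
    split; first by move=> x y; rewrite ler0n.
    by move=> x; under eq_bigr do rewrite eq_sym; rewrite sum_delta.
  rewrite big1 ?subr0 ?mul1r ?cE // => x _.
  case: eqP => // E; have := congr1 (fun f : omega n => f i0) E.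
  by rewrite !ffunE eqxx; case: (x i0).
- exact: V_quantum_le.
- move=> eps he; exists (Eopt R (n:=n)); split; first exact: povm_Eopt.
  by rewrite V_Eopt //; lra.
Qed.
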